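(* Let $\Phi_1,\Phi_2$ be two convex growth functions with $\Phi_2\in \mathscr{U}$. Let $s>0$ and let $\mu$ be a positive Borel measure on $\mathbb{C}_+$. Then the following assertions are equivalent. (a) There is a constant $C>0$ such that for any finite interval $I\subset\mathbb{R}$, $\mu(Q_I)\le \dfrac{C}{\Phi_2\circ\Phi_1^{-1}\left(\frac{1}{|I|^s}\right)}$. (b) There exists a constant $C>0$ such that $$\sup_{z=x+iy\in \mathbb{C}_+}\int_{\mathbb{C}_+}\Phi_2\left(\Phi_1^{-1}\left(\frac{1}{y^s}\right)\frac{y^{2s}}{|z-\bar{w}|^{2s}}\right)d\mu(w)\le C<\infty.$$ Moreover, the (best) constants in (a) and (b) are equivalent.
   Context: $\mathbb{C}_+=\{x+iy: y>0\}$. A growth function is a continuous nondecreasing function from $[0,\infty)$ onto $[0,\infty)$; $\Phi^{-1}$ is its inverse. $\mathscr{U}^q$ ($q\ge1$) is the set of growth functions $\Phi$ with $\Phi(st)\le Ct^q\Phi(s)$ for $s>0,t\ge1$ and $t\mapsto\Phi(t)/t$ nondecreasing; $\mathscr{U}=\bigcup_{q\ge1}\mathscr{U}^q$. For an interval $I\subset\mathbb{R}$, $Q_I=\{x+iy:x\in I,0<y<|I|\}$. *)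

(* Defs.v *)
From HB Require Import structures.
From mathcomp Require Import all_boot all_order all_algebra.
From mathcomp Require Import all_classical all_reals all_analysis.
Set Implicit Arguments. Unset Strict Implicit. Unset Printing Implicit Defensive.
Import Order.TTheory GRing.Theory Num.Theory.
Import numFieldNormedType.Exports.
Local Open Scope classical_set_scope.
Local Open Scope ring_scope.

Section Defs.
Variable R : realType.

(* Growth function: continuous nondecreasing function from [0,oo) onto [0,oo).
   Functions are R -> R; only their values on [0,oo) matter. *)
Definition growth_function (Phi : R -> R) : Prop :=
  {within `[0, +oo[%classic, continuous Phi} /\
  {in `[0, +oo[%classic &, {homo Phi : x y / x <= y}} /\
  Phi @` `[0, +oo[%classic = `[0, +oo[%classic.

Definition convex_on_nonneg (Phi : R -> R) : Prop :=
  forall x y l : R, 0 <= x -> 0 <= y -> 0 <= l <= 1 ->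
    Phi (l * x + (1 - l) * y) <= l * Phi x + (1 - l) * Phi y.

Definition convex_growth_function (Phi : R -> R) : Prop :=
  growth_function Phi /\ convex_on_nonneg Phi.

Definition classU (q : R) (Phi : R -> R) : Prop :=
  growth_function Phi /\
  (exists C : R, 0 < C /\
     forall s t : R, 0 < s -> 1 <= t -> Phi (s * t) <= C * t `^ q * Phi s) /\
  {in `]0, +oo[%classic &, {homo (fun t => Phi t / t) : x y / x <= y}}.

Definition classU_any (Phi : R -> R) : Prop := exists q : R, 1 <= q /\ classU q Phi.

(* Inverse of a growth function: Phi^{-1}(u) = sup {t >= 0 | Phi t <= u}.
   For u > 0 and Phi a convex growth function this is the unique t >= 0
   with Phi t = u. *)
Definition ginv (Phi : R -> R) (u : R) : R :=
  sup [set t : R | 0 <= t /\ Phi t <= u].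

(* Upper half-plane, as a subset of R x R (x + iy <-> (x, y)). *)
Definition upper_half_plane : set (R * R) := [set z | 0 < z.2].

Definition carleson_box (a b : R) : set (R * R) :=
  [set z | a <= z.1 <= b /\ 0 < z.2 < b - a].

Definition dist_conj2 (z w : R * R) : R :=
  (z.1 - w.1) ^+ 2 + (z.2 + w.2) ^+ 2.

End Defs.

(* Main.v *)
Require Import Defs.
From HB Require Import structures.
From mathcomp Require Import all_boot all_order all_algebra.
From mathcomp Require Import all_classical all_reals all_analysis.
From mathcomp Require Import ring lra measurable_realfun.
Import Order.TTheory GRing.Theory Num.Theory.
Import numFieldNormedType.Exports.
Local Open Scope classical_set_scope.
Local Open Scope ring_scope.
Set Implicit Arguments. Unset Strict Implicit. Unset Printing Implicit Defensive.
Section G.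
Variable R : realType.
Implicit Types Phi : R -> R.

Lemma gf_props Phi : growth_function Phi ->
  [/\ Phi 0 = 0, (forall x, 0 <= x -> 0 <= Phi x),
      (forall x y, 0 <= x -> x <= y -> Phi x <= Phi y) &
      (forall u, 0 <= u -> exists t, 0 <= t /\ Phi t = u)].
Proof.
move=> [_ [hom onto]].
have mono : forall x y, 0 <= x -> x <= y -> Phi x <= Phi y.
  move=> x y x0 xy; apply: hom => //; rewrite inE /= in_itv /= andbT //.
  exact: le_trans xy.
have surj : forall u, 0 <= u -> exists t, 0 <= t /\ Phi t = u.
  move=> u u0.
  have : `[0, +oo[%classic u by rewrite /= in_itv /= andbT.
  rewrite -onto => -[t /= ht <-]; exists t; split => //.
  by move: ht; rewrite in_itv /= andbT.
have pos : forall x, 0 <= x -> 0 <= Phi x.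
  move=> x x0.
  have : (Phi @` `[0, +oo[%classic) (Phi x) by exists x => //=; rewrite in_itv /= andbT.
  by rewrite onto /= in_itv /= andbT.
split => //.
have [t [t0 pt]] := surj 0 (lexx _).
have := mono 0 t (lexx 0) t0; rewrite pt => h.
by apply/eqP; rewrite eq_le h pos ?lexx.
Qed.

Lemma ginv_props Phi : convex_growth_function Phi ->
  [/\ (forall u, 0 <= u -> 0 <= ginv Phi u),
      (forall u, 0 < u -> 0 < ginv Phi u) &
      (forall l u, 0 <= l <= 1 -> 0 <= u -> l * ginv Phi u <= ginv Phi (l * u))].
Proof.
move=> [gP cvx]; have [P0 pos mono surj] := gf_props gP.
have hs : forall u, 0 <= u -> has_sup [set t | 0 <= t /\ Phi t <= u].
  move=> u u0; split; first by exists 0; split; rewrite ?lexx ?P0.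
  have [T [T0 PT]] := surj (u + 1) (addr_ge0 u0 ler01).
  exists T => t [t0 tu]; rewrite leNgt; apply/negP => Tt.
  have := mono _ _ T0 (ltW Tt); rewrite PT => h.
  have := le_trans h tu; lra.
have ub : forall u t, 0 <= u -> 0 <= t -> Phi t <= u -> t <= ginv Phi u.
  by move=> u t u0 t0 tu; apply: sup_upper_bound; [exact: hs|split].
have g0 : forall u, 0 <= u -> 0 <= ginv Phi u.
  by move=> u u0; apply: ub; rewrite ?lexx ?P0.
split => //.
- move=> u u0; have [t [t0 pt]] := surj u (ltW u0).
  have tp : 0 < t.
    by rewrite lt_def t0 andbT; apply/eqP => e; move: pt; rewrite e P0 => e'; by move: u0; rewrite -e' ltxx.
  by apply: lt_le_trans tp _; apply: ub => //; [exact: ltW| rewrite pt].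
- move=> l u /andP[l0 l1] u0.
  have [->|lp] := eqVneq l 0; first by rewrite !mul0r g0 ?lexx.
  have lpos : 0 < l by rewrite lt_def lp l0.
  rewrite mulrC -ler_pdivlMr //; apply: ge_sup; first by exists 0; split; rewrite ?lexx ?P0.
  move=> t [t0 tu]; rewrite ler_pdivlMr // mulrC; apply: ub.
  + exact: mulr_ge0.
  + exact: mulr_ge0.
  + have := cvx t 0 l t0 (lexx 0) (introT andP (conj l0 l1)).
    rewrite mulr0 addr0 P0 mulr0 addr0 => h; apply: le_trans h _.
    exact: ler_wpM2l.
Qed.

Lemma U_pos Phi q C : growth_function Phi -> 0 < C ->
  (forall s t : R, 0 < s -> 1 <= t -> Phi (s * t) <= C * t `^ q * Phi s) ->
  forall x, 0 < x -> 0 < Phi x.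
Proof.
move=> gP C0 hU x x0; have [P0 pos mono surj] := gf_props gP.
rewrite lt_def pos ?ltW // andbT; apply/eqP => px.
have [T [T0 PT]] := surj 1 ler01.
have [xT|Tx] := leP x T.
- have := hU x (T / x) x0; rewrite ler_pdivlMr // mul1r => /(_ xT).
  rewrite mulrC divfK ?gt_eqF // PT px mulr0; lra.
- have := mono _ _ T0 (ltW Tx); rewrite PT px; lra.
Qed.

Lemma U_grow Phi q C : convex_growth_function Phi -> 0 < C -> 1 <= q ->
  (forall s t : R, 0 < s -> 1 <= t -> Phi (s * t) <= C * t `^ q * Phi s) ->
  forall X m L, 0 < X -> 0 < m -> m <= L -> 1 <= L ->
  Phi (m * X) <= (1 + C * L `^ (q - 1)) * m * Phi X.
Proof.
move=> [gP cvx] C0 q1 hU X m L X0 m0 mL L1.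
have [P0 pos mono surj] := gf_props gP.
have PX := pos X (ltW X0).
have cL : 0 <= C * L `^ (q - 1) by rewrite mulr_ge0 ?powR_ge0 ?ltW.
have [m1|m1] := leP m 1.
- have := cvx X 0 m (ltW X0) (lexx 0) (introT andP (conj (ltW m0) m1)).
  rewrite mulr0 addr0 P0 mulr0 addr0 => h; apply: le_trans h _.
  rewrite -mulrA mulrDl mul1r lerDl; apply: mulr_ge0 => //; apply: mulr_ge0 => //; exact: ltW.
- have := hU X m X0 (ltW m1); rewrite mulrC => h; apply: le_trans h _.
  rewrite -(mulr_powRB1 (ltW m0)) ?(lt_le_trans ltr01 q1) //.
  have : m `^ (q - 1) <= L `^ (q - 1).
    apply: ge0_ler_powR => //; rewrite ?nnegrE ?subr_ge0 //; [exact: ltW | lra].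
  move=> hmL.
  have hm : 0 <= m `^ (q - 1) := powR_ge0 _ _.
  rewrite mulrDl mul1r mulrDl.
  have k : 0 <= C * m * Phi X by apply: mulr_ge0 => //; apply: mulr_ge0; exact: ltW.
  have := ler_wpM2l k hmL.
  have -> : C * m * Phi X * m `^ (q - 1) = C * (m * m `^ (q - 1)) * Phi X by ring.
  have -> : C * m * Phi X * L `^ (q - 1) = C * L `^ (q - 1) * m * Phi X by ring.
  move=> h; apply: le_trans h _; rewrite lerDr; apply: mulr_ge0 => //; exact: ltW.
Qed.

Lemma powRX (a p : R) n : 0 <= a -> (a ^+ n) `^ p = (a `^ p) ^+ n.
Proof.
move=> a0; rewrite -powR_mulrn // -powRrM mulrC powRrM powR_mulrn //.
exact: powR_ge0.
Qed.

Lemma pow2s (y p : R) : 0 <= y -> y `^ (2 * p) = (y ^+ 2) `^ p.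
Proof. by move=> y0; rewrite powRrM powR_mulrn. Qed.

Lemma geo_le (r c : R) : 0 <= r < 1 -> 0 <= c ->
  (\sum_(k <oo) (c * r ^+ k)%:E <= (c / (1 - r))%:E)%E.
Proof.
move=> /andP[r0 r1] c0.
apply: lime_le; first by apply: is_cvg_nneseries => n _; rewrite lee_fin mulr_ge0 ?exprn_ge0.
apply: nearW => n; rewrite sumEFin lee_fin -mulr_sumr.
rewrite ler_pdivlMr ?subr_gt0 // -mulrA.
have -> : (\sum_(0 <= i < n) r ^+ i) * (1 - r) = 1 - r ^+ n.
  elim: n => [|n IH]; first by rewrite big_geq // mul0r expr0 subrr.
  by rewrite big_nat_recr //= mulrDl IH exprS; ring.
rewrite -[X in _ <= X]mulr1; apply: ler_wpM2l => //.
rewrite lerBlDr lerDl; exact: exprn_ge0.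
Qed.

Lemma mH : measurable (@upper_half_plane R).
Proof.
have := @measurable_snd _ _ R R measurableT _ (measurable_itv `]0, +oo[%R).
rewrite setTI; congr measurable; apply/seteqP; split => z /=;
  by rewrite /upper_half_plane /= in_itv /= andbT.
Qed.

Lemma mQ (a b : R) : measurable (carleson_box a b).
Proof.
have h1 := @measurable_fst _ _ R R measurableT _ (measurable_itv `[a, b]%R).
have h2 := @measurable_snd _ _ R R measurableT _ (measurable_itv `]0, b - a[%R).
rewrite setTI in h1; rewrite setTI in h2.
have := measurableI _ _ h1 h2; congr measurable; apply/seteqP; split => z /=;
  by rewrite /carleson_box /= !in_itv.
Qed.

Lemma QH (a b : R) : carleson_box a b `<=` @upper_half_plane R.
Proof. by move=> z [_ /andP[]]. Qed.

Lemma mF (Phi : R -> R) (z : R * R) (A p : R) :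
  (forall x y, 0 <= x -> x <= y -> Phi x <= Phi y) -> 0 <= A ->
  measurable_fun (@upper_half_plane R)
    (fun w => (Phi (A * (z.2 `^ (2 * p) / dist_conj2 z w `^ p)))%:E).
Proof.
move=> mono A0; apply: measurable_funTS.
apply/measurable_EFinP.
pose Phi' := fun x : R => Phi (Num.max x 0).
have nd : {homo Phi' : x y / x <= y}.
  move=> x y xy; rewrite /Phi'; apply: mono; first by rewrite le_max lexx orbT.
  by rewrite ge_max !le_max xy lexx /= orbT.
pose g := fun w : R * R => A * (z.2 `^ (2 * p) * dist_conj2 z w `^ (- p)).
have mg : measurable_fun setT g.
  apply: measurable_funM; first exact: measurable_cst.
  apply: measurable_funM; first exact: measurable_cst.
  apply: (measurableT_comp (f := fun x : R => x `^ (- p)) (g := dist_conj2 z)); first exact: measurable_powR.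
  rewrite /dist_conj2; apply: measurable_funD; apply: measurable_funX.
    apply: measurable_funB; [exact: measurable_cst | exact: measurable_fst].
  apply: measurable_funD; [exact: measurable_cst | exact: measurable_snd].
apply: (eq_measurable_fun (Phi' \o g)).
  move=> w _; rewrite /Phi' /g /= powRN; congr Phi.
  apply/max_idPl; apply: mulr_ge0 => //; apply: mulr_ge0; rewrite ?invr_ge0; exact: powR_ge0.
apply: measurableT_comp => //; exact: nondecreasing_measurable.
Qed.

Lemma BtoA (Phi1 Phi2 : R -> R) (p q C2 : R) :
  convex_growth_function Phi1 -> convex_growth_function Phi2 -> 0 < C2 -> 0 < p ->
  (forall s t : R, 0 < s -> 1 <= t -> Phi2 (s * t) <= C2 * t `^ q * Phi2 s) ->
  forall (mu : {measure set (R * R) -> \bar R}) (C : R),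
  (forall z : R * R, 0 < z.2 ->
     (\int[mu]_(w in @upper_half_plane R)
         (Phi2 (ginv Phi1 (1 / z.2 `^ p) *
                (z.2 `^ (2 * p) / (dist_conj2 z w) `^ p)))%:E <= C%:E)%E) ->
  forall a b : R, a < b ->
    (mu (carleson_box a b) <=
       (C2 * (5 `^ p) `^ q * C / Phi2 (ginv Phi1 (1 / (b - a) `^ p)))%:E)%E.
Proof.
move=> cP1 cP2 C20 p0 hU mu C hB a b ab.
have [P20 pos2 mono2 surj2] := gf_props cP2.1.
have [g10 g1pos g1l] := ginv_props cP1.
set L := b - a.
have L0 : 0 < L by rewrite /L subr_gt0.
pose z := ((a + b) / 2, L).
have := hB z L0; rewrite /z /= -/z.
set A := ginv Phi1 (1 / L `^ p).
have A0 : 0 < A by apply: g1pos; rewrite divr_gt0 ?powR_gt0.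
have PA : 0 < Phi2 A := U_pos cP2.1 C20 hU A0.
have f5 : 1 <= 5 `^ p.
  have := @ler_powR R 5 (ltW (ltr_nat R 1 5)) 0 p (ltW p0) ; by rewrite powRr0.
have f50 : 0 < 5 `^ p by apply: lt_le_trans f5.
set K := C2 * (5 `^ p) `^ q.
have K0 : 0 < K by rewrite mulr_gt0 ?powR_gt0.
set m := Phi2 A / K.
have m0 : 0 < m by rewrite divr_gt0.
have hm : m <= Phi2 (A / 5 `^ p).
  rewrite /m ler_pdivrMr // /K.
  have := hU (A / 5 `^ p) (5 `^ p) (divr_gt0 A0 f50) f5.
  rewrite divfK ?gt_eqF //; lra.
have pt : forall w, carleson_box a b w ->
    m <= Phi2 (A * (L `^ (2 * p) / dist_conj2 z w `^ p)).
  move=> w [/andP[w1 w2] /andP[w3 w4]].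
  apply: (le_trans hm); apply: mono2; first by rewrite divr_ge0 ?ltW.
  rewrite ler_pM2l //.
  have D0 : 0 < dist_conj2 z w.
    rewrite /dist_conj2 /z /=; apply: ltr_wpDl; first exact: sqr_ge0.
    by rewrite exprn_gt0 // addr_gt0.
  have D5 : dist_conj2 z w <= 5 * L ^+ 2.
    rewrite /dist_conj2 /z /L /=; rewrite /L in w4; nra.
  have : dist_conj2 z w `^ p <= 5 `^ p * L `^ (2 * p).
    rewrite (pow2s _ (ltW L0)) -powRM ?ler0n ?exprn_ge0 ?(ltW L0) //.
    apply: ge0_ler_powR => //; first exact: ltW.
      by rewrite nnegrE; exact: ltW.
    by rewrite nnegrE; apply: mulr_ge0; [exact: ler0n | apply: exprn_ge0; exact: ltW].
  move=> hD; rewrite ler_pdivlMr ?powR_gt0 // mulrC ler_pdivrMr //.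
  by rewrite mulrC.
move=> hI.
have mH' := @mF Phi2 z A p mono2 (ltW A0).
have F0 : forall w, upper_half_plane w ->
    (0 <= (Phi2 (A * (L `^ (2 * p) / dist_conj2 z w `^ p)))%:E)%E.
  move=> w _; rewrite lee_fin; apply: pos2; apply: mulr_ge0; first exact: ltW.
  by apply: divr_ge0; exact: powR_ge0.
have lb : (m%:E * mu (carleson_box a b) <= C%:E)%E.
  apply: le_trans hI; rewrite -integral_cst; last exact: mQ.
  apply: le_trans (ge0_subset_integral mu (mQ a b) mH mH' F0 (@QH a b)).
  apply: ge0_le_integral => //.
  - exact: mQ.
  - by move=> w _; rewrite lee_fin ltW.
  - exact: (measurable_funS mH (@QH a b)).
have -> : K * C / Phi2 A = m^-1 * C by rewrite /m; field; rewrite ?gt_eqF.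
by rewrite EFinM lee_pdivlMl.
Qed.

Lemma term_le_series (u : nat -> \bar R) k : (forall n, (0 <= u n)%E) ->
  (u k <= \sum_(n <oo) u n)%E.
Proof.
move=> u0; apply: le_trans (nneseries_lim_ge k.+1 (fun n _ _ => u0 n)).
rewrite big_nat_recr //=; apply: leeDr; exact: sume_ge0.
Qed.

Definition box (x y : R) (k : nat) := carleson_box (x - 2 ^+ k * y) (x + 2 ^+ k * y).

Lemma exists_box (x y : R) (w : R * R) : 0 < y -> 0 < w.2 -> exists k, box x y k w.
Proof.
move=> y0 w0.
set M := (`|w.1 - x| + w.2) / y.
exists (Num.truncn M).+1; set n := (Num.truncn M).+1.
have hM : M < n%:R by exact: truncnS_gt.
have h2 : n%:R <= 2 ^+ n :> R.
  by rewrite -natrX ler_nat; apply: ltnW; apply: ltn_expl.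
have : `|w.1 - x| + w.2 < 2 ^+ n * y.
  by rewrite -ltr_pdivrMr //; apply: lt_le_trans h2.
move=> h; have t0 : 0 <= 2 ^+ n * y :> R by rewrite mulr_ge0 ?exprn_ge0 // ltW.
rewrite /box /carleson_box /=; split.
- have n1 := ler_norm (w.1 - x).
  have n2 : - (w.1 - x) <= `|w.1 - x| by rewrite -normrN ler_norm.
  apply/andP; split; lra.
- apply/andP; split => //; have := normr_ge0 (w.1 - x); lra.
Qed.

Lemma min_box (x y : R) (w : R * R) n : box x y n w ->
  exists k, box x y k w /\ (forall j, j.+1 = k -> ~ box x y j w).
Proof.
elim: n => [|n IH] h; first by exists 0%N; split => // j.
have [hn|hn] := pselect (box x y n w); first exact: IH.
by exists n.+1; split => // j [->].
Qed.

Lemma D_lb (z w : R * R) k : 0 < z.2 -> 0 < w.2 ->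
  (forall j, j.+1 = k -> ~ box z.1 z.2 j w) ->
  (2 ^+ k * z.2) ^+ 2 <= 4 * dist_conj2 z w.
Proof.
case: z => x y /= y0 w0; rewrite /dist_conj2 /=.
case: k => [|j] hn.
  rewrite expr0 mul1r.
  have h1 := sqr_ge0 (x - w.1).
  have h2 : y ^+ 2 <= (y + w.2) ^+ 2.
    rewrite !expr2; apply: ler_pM; try lra.
  have := sqr_ge0 y; lra.
have := hn j erefl; rewrite /box /carleson_box.
set t := 2 ^+ j * y.
have t0 : 0 <= t by rewrite mulr_ge0 ?exprn_ge0 // ltW.
have -> : 2 ^+ j.+1 * y = 2 * t by rewrite /t exprS mulrA.
move=> nb; rewrite leNgt; apply/negP => hlt; apply: nb.
have h1 : (x - w.1) ^+ 2 < t ^+ 2.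
  have := sqr_ge0 (y + w.2); nra.
have h2 : (y + w.2) ^+ 2 < t ^+ 2.
  have := sqr_ge0 (x - w.1); nra.
split.
  apply/andP; split; rewrite leNgt; apply/negP => h; nra.
apply/andP; split => //; nra.
Qed.

Lemma ratio_le (z w : R * R) k p : 0 < p -> 0 < z.2 ->
  (2 ^+ k * z.2) ^+ 2 <= 4 * dist_conj2 z w ->
  z.2 `^ (2 * p) / dist_conj2 z w `^ p <= (2 `^ p) ^+ 2 * (((2 `^ p)^-1) ^+ 2) ^+ k.
Proof.
move=> p0 y0 hD; set rho := 2 `^ p.
have rho0 : 0 < rho by rewrite powR_gt0.
have t0 : 0 < (2 ^+ k * z.2) ^+ 2 by rewrite exprn_gt0 // mulr_gt0 // exprn_gt0.
have D0 : 0 < dist_conj2 z w.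
  have := lt_le_trans t0 hD; rewrite pmulr_rgt0 //.
have Dp0 : 0 < dist_conj2 z w `^ p by rewrite powR_gt0.
have P0 : 0 < (rho ^+ k) ^+ 2 by rewrite !exprn_gt0.
have h := @ge0_ler_powR R p (ltW p0) _ _ (ltW t0) (mulr_ge0 (ler0n _ 4) (ltW D0)) hD.
have e1 : ((2 ^+ k * z.2) ^+ 2) `^ p = (rho ^+ k) ^+ 2 * z.2 `^ (2 * p).
  rewrite exprMn powRM ?exprn_ge0 ?ler0n ?(ltW y0) //.
  by rewrite powRX ?exprn_ge0 ?ler0n // powRX ?ler0n // -pow2s // ltW.
have e2 : (4 * dist_conj2 z w) `^ p = rho ^+ 2 * dist_conj2 z w `^ p.
  rewrite powRM ?ler0n ?(ltW D0) //; congr (_ * _).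
  by rewrite -powRX ?ler0n //; congr (_ `^ _); rewrite expr2 -natrM.
move: h; rewrite e1 e2.
move=> h.
rewrite -exprM mulnC exprM !exprVn ler_pdivrMr // mulrAC ler_pdivlMr //.
by rewrite mulrC.
Qed.

Definition KA (p q C2 : R) :=
  (1 + C2 * ((2 `^ p) ^+ 3) `^ (q - 1)) * (2 `^ p) ^+ 3 / (1 - (2 `^ p)^-1).

Lemma AtoB (Phi1 Phi2 : R -> R) (p q C2 : R) :
  convex_growth_function Phi1 -> convex_growth_function Phi2 -> 0 < C2 -> 0 < p -> 1 <= q ->
  (forall s t : R, 0 < s -> 1 <= t -> Phi2 (s * t) <= C2 * t `^ q * Phi2 s) ->
  forall (mu : {measure set (R * R) -> \bar R}) (C : R), 0 < C ->
  (forall a b : R, a < b ->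
      (mu (carleson_box a b) <= (C / Phi2 (ginv Phi1 (1 / (b - a) `^ p)))%:E)%E) ->
  forall z : R * R, 0 < z.2 ->
     (\int[mu]_(w in @upper_half_plane R)
         (Phi2 (ginv Phi1 (1 / z.2 `^ p) *
                (z.2 `^ (2 * p) / (dist_conj2 z w) `^ p)))%:E <= (KA p q C2 * C)%:E)%E.
Proof.
move=> cP1 cP2 C20 p0 q1 hU mu C C0 hA z y0.
have [P20 pos2 mono2 surj2] := gf_props cP2.1.
have [g10 g1pos g1l] := ginv_props cP1.
set A := ginv Phi1 (1 / z.2 `^ p).
have A0 : 0 < A by apply: g1pos; rewrite divr_gt0 ?powR_gt0.
set rho := 2 `^ p.
have rho1 : 1 < rho.
  have := @gt0_ltr_powR R p p0 1 2; rewrite powR1; apply; rewrite ?nnegrE ?ler0n //.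
  exact: ltr1n.
have rho0 : 0 < rho by apply: lt_trans rho1.
set r := rho^-1.
have r0 : 0 < r by rewrite invr_gt0.
have r1 : r < 1 by rewrite invf_lt1.
set N := 1 + C2 * (rho ^+ 3) `^ (q - 1).
have N0 : 0 <= N.
  by rewrite /N; apply: addr_ge0 => //; apply: mulr_ge0; [exact: ltW | exact: powR_ge0].
pose c k := Phi2 (A * (rho ^+ 2 * (r ^+ 2) ^+ k)).
have c0 : forall k, 0 <= c k.
  move=> k; apply: pos2; apply: mulr_ge0; first exact: ltW.
  by apply: mulr_ge0; apply: exprn_ge0; [exact: ltW | apply: exprn_ge0; exact: ltW].
pose u k w := (c k * \1_(box z.1 z.2 k) w)%:E.
have u0 : forall k w, (0 <= u k w)%E.
  by move=> k w; rewrite lee_fin; apply: mulr_ge0 => //; rewrite indicE ler0n.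
have mu_ : forall k, measurable_fun (@upper_half_plane R) (u k).
  move=> k; apply/measurable_EFinP; apply: measurable_funM; first exact: measurable_cst.
  by apply: measurable_indic; exact: mQ.
have F0 : forall w, upper_half_plane w ->
    (0 <= (Phi2 (A * (z.2 `^ (2 * p) / dist_conj2 z w `^ p)))%:E)%E.
  move=> w _; rewrite lee_fin; apply: pos2; apply: mulr_ge0; first exact: ltW.
  by apply: divr_ge0; exact: powR_ge0.
have pt : forall w, upper_half_plane w ->
    ((Phi2 (A * (z.2 `^ (2 * p) / dist_conj2 z w `^ p)))%:E <= \sum_(k <oo) u k w)%E.
  move=> w hw.
  have [n hn] := exists_box z.1 y0 hw.
  have [k [hk hmin]] := min_box hn.
  have hD := D_lb y0 hw hmin.
  have hr := ratio_le p0 y0 hD.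
  apply: le_trans (term_le_series k (fun n => u0 n w)).
  rewrite /u indicE mem_set // mulr1 lee_fin /c; apply: mono2.
    apply: mulr_ge0; first exact: ltW.
    by apply: divr_ge0; exact: powR_ge0.
  by apply: ler_wpM2l => //; exact: ltW.
have mS : measurable_fun (@upper_half_plane R) (fun w => \sum_(k <oo) u k w)%E.
  exact: (@ge0_emeasurable_sum _ _ _ _ u xpredT (fun k x _ _ => u0 k x) (fun k _ => mu_ k)).
apply: le_trans (ge0_le_integral mu mH F0 (@mF Phi2 z A p mono2 (ltW A0)) mS pt) _.
rewrite (integral_nneseries mu mH mu_ (fun n w _ => u0 n w)).
have bk : forall k, (\int[mu]_(w in @upper_half_plane R) u k w <=
                    ((N * rho ^+ 3 * C) * r ^+ k)%:E)%E.
  move=> k.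
  have -> : (\int[mu]_(w in @upper_half_plane R) u k w =
      (c k)%:E * mu (box z.1 z.2 k))%E.
    rewrite /u; under eq_integral do rewrite EFinM.
    have m1 : measurable_fun (@upper_half_plane R) (fun w => (\1_(box z.1 z.2 k) w : R)%:E).
      by apply/measurable_EFinP; apply: measurable_indic; exact: mQ.
    have p1 : forall w, upper_half_plane w -> (0 <= (\1_(box z.1 z.2 k) w : R)%:E)%E.
      by move=> w _; rewrite lee_fin indicE ler0n.
    rewrite (ge0_integralZl_EFin mu mH p1 m1 (c0 k)).
    rewrite (integral_indic mu mH (mQ _ _)) setIidl //; exact: QH.
  rewrite /box.
  set a := z.1 - 2 ^+ k * z.2; set b := z.1 + 2 ^+ k * z.2.
  have t0 : 0 < 2 ^+ k * z.2 by rewrite mulr_gt0 // exprn_gt0.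
  have ab : a < b by rewrite /a /b; lra.
  have hk := hA a b ab.
  have eba : b - a = 2 ^+ k.+1 * z.2 by rewrite /a /b exprS; ring.
  rewrite eba in hk.
  have e1 : 1 / (2 ^+ k.+1 * z.2) `^ p = r ^+ k.+1 * (1 / z.2 `^ p).
    rewrite powRM ?exprn_ge0 ?ler0n ?(ltW y0) // powRX ?ler0n // -/rho /r exprVn.
    by rewrite !div1r invfM.
  set X := r ^+ k.+1 * A.
  have X0 : 0 < X by rewrite mulr_gt0 // exprn_gt0.
  have PX : 0 < Phi2 X := U_pos cP2.1 C20 hU X0.
  have hG : Phi2 X <= Phi2 (ginv Phi1 (1 / (2 ^+ k.+1 * z.2) `^ p)).
    rewrite e1; apply: mono2; first exact: ltW.
    apply: g1l; last by rewrite divr_ge0 ?powR_ge0.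
    by rewrite exprn_ge0 ?exprn_ile1 // ltW.
  move: hk hG; set G := Phi2 (ginv Phi1 (1 / (2 ^+ k.+1 * z.2) `^ p)) => hk hG.
  have G0 : 0 < G := lt_le_trans PX hG.
  have rk1 : r ^+ k <= 1 by rewrite exprn_ile1 // ltW.
  have rho3 : 1 <= rho ^+ 3 by rewrite exprn_ege1 // ltW.
  have hc : c k <= N * (rho ^+ 3 * r ^+ k) * Phi2 X.
    have -> : c k = Phi2 ((rho ^+ 3 * r ^+ k) * X).
      rewrite /c /X; congr Phi2.
      rewrite -exprM mulnC exprM [r ^+ k.+1]exprS.
      have rr : r * rho = 1 by rewrite /r mulVf // gt_eqF.
      set t := r ^+ k.
      rewrite [RHS](_ : _ = A * (rho ^+ 2 * t ^+ 2) * (r * rho)); last by ring.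
      by rewrite rr mulr1.
    apply: (U_grow cP2 C20 q1 hU X0 _ _ rho3).
      by rewrite mulr_gt0 // exprn_gt0.
    by rewrite ler_piMr ?exprn_ge0 // ltW.
  apply: le_trans (lee_pmul _ _ (lexx (c k)%:E) hk) _.
  - by rewrite lee_fin.
  - exact: measure_ge0.
  rewrite -EFinM lee_fin.
  apply: (@le_trans _ _ (c k * (C / Phi2 X))).
    apply: ler_wpM2l => //.
    rewrite ler_pdivrMr // mulrAC ler_pdivlMr //.
    by apply: ler_wpM2l => //; exact: ltW.
  rewrite mulrA ler_pdivrMr //.
  have := ler_wpM2r (ltW C0) hc => h; apply: le_trans h _.
  by rewrite le_eqVlt; apply/orP; left; apply/eqP; ring.
apply: (@le_trans _ _ (\sum_(k <oo) ((N * rho ^+ 3 * C) * r ^+ k)%:E)%E).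
  apply: lee_nneseries; last by move=> k _; exact: bk.
  by move=> k _ _; apply: integral_ge0 => w _; exact: u0.
have -> : KA p q C2 * C = (N * rho ^+ 3 * C) / (1 - r).
  by rewrite /KA -/rho -/N -/r; field; rewrite subr_eq0 eq_sym lt_eqF.
apply: geo_le; first by rewrite (ltW r0) r1.
by apply: mulr_ge0 => //; [apply: mulr_ge0 => //; apply: exprn_ge0; exact: ltW | exact: ltW].
Qed.
End G.

Theorem theorem4p1 (R : realType) (Phi1 Phi2 : R -> R) (s : R) :
  convex_growth_function Phi1 -> convex_growth_function Phi2 ->
  classU_any Phi2 -> 0 < s ->
  let condA (mu : {measure set (R * R) -> \bar R}) (C : R) :=
    forall a b : R, a < b ->
      (mu (carleson_box a b) <=
       (C / Phi2 (ginv Phi1 (1 / (b - a) `^ s)))%:E)%E in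
  let condB (mu : {measure set (R * R) -> \bar R}) (C : R) :=
    forall z : R * R, 0 < z.2 ->
      (\int[mu]_(w in @upper_half_plane R)
         (Phi2 (ginv Phi1 (1 / z.2 `^ s) *
                (z.2 `^ (2 * s) / (dist_conj2 z w) `^ s)))%:E
       <= C%:E)%E in
  (forall mu : {measure set (R * R) -> \bar R},
     (exists C : R, 0 < C /\ condA mu C) <-> (exists C : R, 0 < C /\ condB mu C)) /\
  (exists K : R, 0 < K /\
     forall (mu : {measure set (R * R) -> \bar R}) (C : R), 0 < C ->
       (condA mu C -> condB mu (K * C)) /\ (condB mu C -> condA mu (K * C))).
Proof.
move=> cP1 cP2 [q [q1 [_ [[C2 [C20 hU]] _]]]] s0 condA condB.
have [P20 pos2 mono2 surj2] := gf_props cP2.1.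
have [g10 g1pos g1l] := ginv_props cP1.
set KB := C2 * (5 `^ s) `^ q.
have KB0 : 0 < KB by rewrite mulr_gt0 // powR_gt0 // powR_gt0.
set Ka := KA s q C2.
have Ka0 : 0 < Ka.
  rewrite /Ka /KA; set rho := 2 `^ s.
  have rho1 : 1 < rho.
    have := @gt0_ltr_powR R s s0 1 2; rewrite powR1; apply; rewrite ?nnegrE ?ler0n //.
    exact: ltr1n.
  have rho0 : 0 < rho by apply: lt_trans rho1.
  apply: divr_gt0.
    apply: mulr_gt0; last exact: exprn_gt0.
    apply: ltr_pwDl => //; apply: mulr_ge0; [exact: ltW | exact: powR_ge0].
  by rewrite subr_gt0 invf_lt1.
have second : forall (mu : {measure set (R * R) -> \bar R}) (C : R), 0 < C ->
    (condA mu C -> condB mu ((Ka + KB) * C)) /\ (condB mu C -> condA mu ((Ka + KB) * C)).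
  move=> mu C C0; split.
  - move=> hA z hz; apply: le_trans (AtoB cP1 cP2 C20 s0 q1 hU C0 hA hz) _.
    rewrite lee_fin -/Ka; apply: ler_wpM2r; [exact: ltW | rewrite lerDl; exact: ltW].
  - move=> hB a b ab; apply: le_trans (BtoA cP1 cP2 C20 s0 hU hB ab) _.
    rewrite lee_fin ler_wpM2r //.
      rewrite invr_ge0; apply: pos2; apply: g10.
      by rewrite divr_ge0 ?powR_ge0.
    rewrite -/KB; apply: ler_wpM2r; [exact: ltW | rewrite lerDr; exact: ltW].
split; last by exists (Ka + KB); split; [exact: addr_gt0 | exact: second].
move=> mu; split => -[C [C0 h]]; exists ((Ka + KB) * C);
  (split; [by rewrite mulr_gt0 // addr_gt0 | by have [h1 h2] := second mu C C0; auto]).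
Qed.
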